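(* Let $\Phi\colon\mathbb X\rightrightarrows\mathbb Y$ have closed graph, $(\bar x,\bar y)\in\operatorname{gph}\Phi$ and $u\in\mathbb S_{\mathbb X}$. If $\Phi$ is quasi-normal in direction $u$ at $(\bar x,\bar y)$ with respect to some orthonormal basis $\{e_1,\dots,e_m\}$ of $\mathbb Y$, then $\Phi$ is strongly asymptotically regular at $(\bar x,\bar y)$ in direction $u$ and metrically subregular at $(\bar x,\bar y)$ in direction $u$.
   Context: $\widehat D^*$ regular coderivative; $D^*\Phi((\bar x,\bar y);(u,v))(y^* )=\{x^*\mid(x^*,-y^* )\in\mathcal N_{\operatorname{gph}\Phi}((\bar x,\bar y);(u,v))\}$ with $\mathcal N_Q(\bar z;w)$ the directional limiting normal cone (all limits of $\eta_k\in\widehat{\mathcal N}_Q(\bar z+t_kw_k)$, $w_k\to w$, $t_k\searrow0$); $\ker\Psi=\{y^*\mid0\in\Psi(y^* )\}$, $\operatorname{Im}\Psi=\bigcup_z\Psi(z)$. Quasi-normality in direction $u$ w.r.t. $\{e_i\}$: there is no nonzero $\lambda\in\ker D^*\Phi((\bar x,\bar y);(u,0))$ for which there exist $\{(x_k,y_k)\}\subset\operatorname{gph}\Phi$ with $x_k\ne\bar x$, $\{\lambda_k\}\subset\mathbb Y$, $\{\eta_k\}\subset\mathbb X$ with $x_k\to\bar x$, $y_k\to\bar y$, $\lambda_k\to\lambda$, $\eta_k\to0$, $(x_k-\bar x)/\|x_k-\bar x\|\to u$, $(y_k-\bar y)/\|x_k-\bar x\|\to0$, $\eta_k\in\widehat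 D^*\Phi(x_k,y_k)(\lambda_k)$ and $\langle\lambda,e_i\rangle\langle y_k-\bar y,e_i\rangle>0$ whenever $\langle\lambda,e_i\rangle\ne0$. Strong asymptotic regularity in direction $u$: for all $\{(x_k,y_k)\}\subset\operatorname{gph}\Phi$, $\{x_k^*\}$, $\{\lambda_k\}$, $x^*,y^*$ with $x_k\notin\Phi^{-1}(\bar y)$, $y_k\ne\bar y$, $x_k^*\in\widehat D^*\Phi(x_k,y_k)(\lambda_k)$, $x_k\to\bar x$, $y_k\to\bar y$, $x_k^*\to x^*$, $(x_k-\bar x)/\|x_k-\bar x\|\to u$, $(y_k-\bar y)/\|x_k-\bar x\|\to0$, $\|\lambda_k\|\to\infty$, $(y_k-\bar y)/\|y_k-\bar y\|-\lambda_k/\|\lambda_k\|\to0$, $(\|y_k-\bar y\|/\|x_k-\bar x\|)\lambda_k\to y^*$, we have $x^*\in\operatorname{Im}D^*\Phi((\bar x,\bar y);(u,0))$. Metric subregularity in direction $u$: there are $\varepsilon,\delta,\kappa>0$ with $\operatorname{dist}(x,\Phi^{-1}(\bar y))\le\kappa\operatorname{dist}(\bar y,\Phi(x))$ for all $x\in\bar x+\mathbb B_{\varepsilon,\delta}(u)$, where $\mathbb B_{\varepsilon,\delta}(u)=\{v\mid \|\|v\|u-\|u\|v\|\le\delta\|u\|\|v\|,\ \|v\|\le\varepsilon\}$. *)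

(* Defs.v *)
From HB Require Import structures.
From mathcomp Require Import all_boot all_order all_algebra.
From mathcomp Require Import all_classical all_reals all_analysis.
Set Implicit Arguments. Unset Strict Implicit. Unset Printing Implicit Defensive.
Import Order.TTheory GRing.Theory Num.Theory.
Import numFieldNormedType.Exports.
Local Open Scope classical_set_scope.
Local Open Scope ring_scope.

(* Euclidean spaces X = R^n, Y = R^m realised as row vectors 'rV[R]_n with the
   standard inner product and the induced Euclidean norm. Convergence of
   sequences uses the library topology on 'rV (equivalent to the Euclidean one). *)

Definition dotv (R : realType) (n : nat) (u v : 'rV[R]_n) : R :=
  \sum_(i < n) u ord0 i * v ord0 i.

Definition enorm (R : realType) (n : nat) (u : 'rV[R]_n) : R := Num.sqrt (dotv u u).

Definition pdot (R : realType) (n m : nat) (p q : 'rV[R]_n * 'rV[R]_m) : R :=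
  dotv p.1 q.1 + dotv p.2 q.2.
Definition pnorm (R : realType) (n m : nat) (p : 'rV[R]_n * 'rV[R]_m) : R :=
  Num.sqrt (pdot p p).

Definition gph (R : realType) (n m : nat) (Phi : 'rV[R]_n -> set 'rV[R]_m)
  : set ('rV[R]_n * 'rV[R]_m) := [set p | Phi p.1 p.2].

(* regular (Frechet) normal cone of Q at z (empty if z \notin Q):
   limsup_{w ->_Q z} <eta, w - z> / ||w - z|| <= 0 *)
Definition rnormal (R : realType) (n m : nat) (Q : set ('rV[R]_n * 'rV[R]_m))
  (z : 'rV[R]_n * 'rV[R]_m) : set ('rV[R]_n * 'rV[R]_m) :=
  [set eta | Q z /\
    forall eps : R, 0 < eps -> exists2 del : R, 0 < del &
      forall w, Q w -> pnorm (w.1 - z.1, w.2 - z.2) < del ->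
        pdot eta (w.1 - z.1, w.2 - z.2) <= eps * pnorm (w.1 - z.1, w.2 - z.2)].

Definition dlnormal (R : realType) (n m : nat) (Q : set ('rV[R]_n * 'rV[R]_m))
  (z w : 'rV[R]_n * 'rV[R]_m) : set ('rV[R]_n * 'rV[R]_m) :=
  [set eta | exists (t : nat -> R) (wk etak : nat -> 'rV[R]_n * 'rV[R]_m),
     (forall k, 0 < t k) /\ t @ \oo --> (0 : R) /\
     wk @ \oo --> w /\ etak @ \oo --> eta /\
     forall k, rnormal Q (z.1 + t k *: (wk k).1, z.2 + t k *: (wk k).2) (etak k)].

Definition rcoder (R : realType) (n m : nat) (Phi : 'rV[R]_n -> set 'rV[R]_m)
  (x : 'rV[R]_n) (y ystar : 'rV[R]_m) : set 'rV[R]_n :=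
  [set xstar | rnormal (gph Phi) (x, y) (xstar, - ystar)].

Definition dlcoder (R : realType) (n m : nat) (Phi : 'rV[R]_n -> set 'rV[R]_m)
  (x : 'rV[R]_n) (y : 'rV[R]_m) (u : 'rV[R]_n) (v : 'rV[R]_m) (ystar : 'rV[R]_m)
  : set 'rV[R]_n :=
  [set xstar | dlnormal (gph Phi) (x, y) (u, v) (xstar, - ystar)].

Definition mker (R : realType) (n m : nat) (Psi : 'rV[R]_m -> set 'rV[R]_n)
  : set 'rV[R]_m := [set ys | Psi ys 0].
Definition mim (R : realType) (n m : nat) (Psi : 'rV[R]_m -> set 'rV[R]_n)
  : set 'rV[R]_n := [set xs | exists ys, Psi ys xs].

Definition orthonormal_basis (R : realType) (m : nat) (e : 'I_m -> 'rV[R]_m) : Prop :=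
  forall i j : 'I_m, dotv (e i) (e j) = (i == j)%:R.

Definition quasi_normal_dir (R : realType) (n m : nat) (Phi : 'rV[R]_n -> set 'rV[R]_m)
  (xb : 'rV[R]_n) (yb : 'rV[R]_m) (u : 'rV[R]_n) (e : 'I_m -> 'rV[R]_m) : Prop :=
  ~ exists lam : 'rV[R]_m,
      lam != 0 /\ mker (dlcoder Phi xb yb u 0) lam /\
      exists (xk : nat -> 'rV[R]_n) (yk : nat -> 'rV[R]_m)
             (lamk : nat -> 'rV[R]_m) (etak : nat -> 'rV[R]_n),
        (forall k, gph Phi (xk k, yk k)) /\ (forall k, xk k != xb) /\
        xk @ \oo --> xb /\ yk @ \oo --> yb /\ lamk @ \oo --> lam /\
        etak @ \oo --> (0 : 'rV[R]_n) /\
        (fun k => (enorm (xk k - xb))^-1 *: (xk k - xb)) @ \oo --> u /\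
        (fun k => (enorm (xk k - xb))^-1 *: (yk k - yb)) @ \oo --> (0 : 'rV[R]_m) /\
        (forall k, rcoder Phi (xk k) (yk k) (lamk k) (etak k)) /\
        (forall k (i : 'I_m), dotv lam (e i) != 0 ->
             0 < dotv lam (e i) * dotv (yk k - yb) (e i)).

Definition strong_asym_reg_dir (R : realType) (n m : nat) (Phi : 'rV[R]_n -> set 'rV[R]_m)
  (xb : 'rV[R]_n) (yb : 'rV[R]_m) (u : 'rV[R]_n) : Prop :=
  forall (xk : nat -> 'rV[R]_n) (yk : nat -> 'rV[R]_m) (xsk : nat -> 'rV[R]_n)
         (lamk : nat -> 'rV[R]_m) (xs : 'rV[R]_n) (ys : 'rV[R]_m),
    (forall k, gph Phi (xk k, yk k)) ->
    (forall k, ~ Phi (xk k) yb) ->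
    (forall k, yk k != yb) ->
    (forall k, rcoder Phi (xk k) (yk k) (lamk k) (xsk k)) ->
    xk @ \oo --> xb -> yk @ \oo --> yb -> xsk @ \oo --> xs ->
    (fun k => (enorm (xk k - xb))^-1 *: (xk k - xb)) @ \oo --> u ->
    (fun k => (enorm (xk k - xb))^-1 *: (yk k - yb)) @ \oo --> (0 : 'rV[R]_m) ->
    (fun k => enorm (lamk k)) @ \oo --> +oo ->
    (fun k => (enorm (yk k - yb))^-1 *: (yk k - yb) - (enorm (lamk k))^-1 *: lamk k)
       @ \oo --> (0 : 'rV[R]_m) ->
    (fun k => (enorm (yk k - yb) / enorm (xk k - xb)) *: lamk k) @ \oo --> ys ->
    mim (dlcoder Phi xb yb u 0) xs.

(* distance to a set, +oo for the empty set *)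
Definition edist (R : realType) (n : nat) (x : 'rV[R]_n) (A : set 'rV[R]_n) : \bar R :=
  ereal_inf [set (enorm (x - a))%:E | a in A].

Definition Bdir (R : realType) (n : nat) (eps del : R) (u : 'rV[R]_n) : set 'rV[R]_n :=
  [set v | enorm (enorm v *: u - enorm u *: v) <= del * enorm u * enorm v /\
           enorm v <= eps].

Definition metric_subreg_dir (R : realType) (n m : nat) (Phi : 'rV[R]_n -> set 'rV[R]_m)
  (xb : 'rV[R]_n) (yb : 'rV[R]_m) (u : 'rV[R]_n) : Prop :=
  exists eps del kap : R, 0 < eps /\ 0 < del /\ 0 < kap /\
    forall x : 'rV[R]_n, Bdir eps del u (x - xb) ->
      (edist x [set z | Phi z yb] <= kap%:E * edist yb (Phi x))%E.

(* Main.v *)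
Require Import Defs.
From HB Require Import structures.
From mathcomp Require Import all_boot all_order all_algebra.
From mathcomp Require Import all_classical all_reals all_analysis.
From mathcomp Require Import ring lra.
Set Implicit Arguments. Unset Strict Implicit. Unset Printing Implicit Defensive.
Import Order.TTheory GRing.Theory Num.Theory.
Import numFieldNormedType.Exports.
Local Open Scope classical_set_scope.
Local Open Scope ring_scope.

Section basic.
Variables (R : realType) (n : nat).
Implicit Types (u v w : 'rV[R]_n).

Lemma dotvC u v : dotv u v = dotv v u.
Proof. by apply: eq_bigr => i _; rewrite mulrC. Qed.

Lemma dotvDl u v w : dotv (u + v) w = dotv u w + dotv v w.
Proof. by rewrite /dotv -big_split; apply: eq_bigr => i _; rewrite !mxE mulrDl. Qed.

Lemma dotvZl (c : R) u w : dotv (c *: u) w = c * dotv u w.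
Proof. by rewrite /dotv mulr_sumr; apply: eq_bigr => i _; rewrite !mxE mulrA. Qed.

Lemma dotvNl u w : dotv (- u) w = - dotv u w.
Proof. by rewrite -scaleN1r dotvZl mulN1r. Qed.

Lemma dotvBl u v w : dotv (u - v) w = dotv u w - dotv v w.
Proof. by rewrite dotvDl dotvNl. Qed.

Lemma dotvDr u v w : dotv w (u + v) = dotv w u + dotv w v.
Proof. by rewrite dotvC dotvDl !(dotvC w). Qed.
Lemma dotvZr (c : R) u w : dotv w (c *: u) = c * dotv w u.
Proof. by rewrite dotvC dotvZl dotvC. Qed.
Lemma dotvNr u w : dotv w (- u) = - dotv w u.
Proof. by rewrite dotvC dotvNl dotvC. Qed.
Lemma dotvBr u v w : dotv w (u - v) = dotv w u - dotv w v.
Proof. by rewrite dotvDr dotvNr. Qed.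
Lemma dotv0l w : dotv 0 w = 0.
Proof. by rewrite -(scale0r 0) dotvZl mul0r. Qed.

Lemma dotv_ge0 v : 0 <= dotv v v.
Proof. by apply: sumr_ge0 => i _; rewrite -expr2 sqr_ge0. Qed.

Lemma coord_sq_le v i : v ord0 i ^+ 2 <= dotv v v.
Proof.
rewrite /dotv (bigD1 i) //= -expr2 lerDl.
by apply: sumr_ge0 => j _; rewrite -expr2 sqr_ge0.
Qed.

Lemma dotv_eq0 v : dotv v v = 0 -> v = 0.
Proof.
move=> h; apply/rowP => i; rewrite mxE.
have : v ord0 i ^+ 2 <= 0 by rewrite -h coord_sq_le.
by rewrite le_eqVlt ltNge sqr_ge0 orbF sqrf_eq0 => /eqP.
Qed.

Lemma enorm_ge0 v : 0 <= enorm v.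
Proof. exact: sqrtr_ge0. Qed.

Lemma enorm_sq v : enorm v ^+ 2 = dotv v v.
Proof. by rewrite sqr_sqrtr // dotv_ge0. Qed.

Lemma enormZ (c : R) v : enorm (c *: v) = `|c| * enorm v.
Proof. by rewrite /enorm dotvZl dotvZr mulrA -expr2 sqrtrM ?sqrtr_sqr // sqr_ge0. Qed.

Lemma enormN v : enorm (- v) = enorm v.
Proof. by rewrite -scaleN1r enormZ normrN1 mul1r. Qed.

Lemma enormB u v : enorm (u - v) = enorm (v - u).
Proof. by rewrite -enormN opprB. Qed.

Lemma enorm_eq0 v : enorm v = 0 -> v = 0.
Proof. by move=> h; apply: dotv_eq0; rewrite -enorm_sq h expr0n. Qed.

Lemma enorm0 : enorm (0 : 'rV[R]_n) = 0.
Proof. by rewrite /enorm dotv0l sqrtr0. Qed.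

Lemma enorm_gt0 v : v != 0 -> 0 < enorm v.
Proof. by move=> h; rewrite lt_neqAle enorm_ge0 andbT eq_sym; apply: contra h => /eqP/enorm_eq0 ->. Qed.

Lemma coord_le_enorm v i : `|v ord0 i| <= enorm v.
Proof.
rewrite -(ler_pXn2r (_ : 0 < 2)%N) ?nnegrE ?enorm_ge0 //.
by rewrite enorm_sq real_normK ?num_real // coord_sq_le.
Qed.

Lemma mxnorm_le_enorm v : `|v| <= enorm v.
Proof.
rewrite (_ : `|v| = mx_norm v) // mx_normrE; apply/bigmax_leP; split; first exact: enorm_ge0.
by case=> a b _ /=; rewrite (ord1 a); apply: coord_le_enorm.
Qed.


End basic.

Section conv.
Variables (R : realType) (n : nat) (T : Type) (F : set_system T).
Context {FF : Filter F}.

Lemma cvg_coord (f : T -> 'rV[R]_n) (a : 'rV[R]_n) i : f @ F --> a ->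
  (fun x => f x ord0 i) @ F --> a ord0 i.
Proof.
move=> fa; apply: (cvg_comp f (fun M : 'rV[R]_n => M ord0 i) fa).
exact: coord_continuous.
Qed.

Lemma cvg_dotv (f g : T -> 'rV[R]_n) (a b : 'rV[R]_n) : f @ F --> a -> g @ F --> b ->
  (fun x => dotv (f x) (g x)) @ F --> dotv a b.
Proof.
move=> fa gb; rewrite /dotv.
apply: (@cvg_big R 'I_n +%R 0 xpredT _); first exact: add_continuous.
move=> i _; apply: cvgM; [exact: cvg_coord|exact: cvg_coord].
Qed.

Lemma cvg_enorm (f : T -> 'rV[R]_n) (a : 'rV[R]_n) : f @ F --> a ->
  (fun x => enorm (f x)) @ F --> enorm a.
Proof.
move=> fa; apply: (cvg_comp (fun x => dotv (f x) (f x)) (@Num.sqrt R) (G := nbhs (dotv a a))).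
  exact: cvg_dotv.
exact: sqrt_continuous.
Qed.

Lemma enorm_cvg (f : T -> 'rV[R]_n) (a : 'rV[R]_n) :
  (fun x => enorm (f x - a)) @ F --> 0 -> f @ F --> a.
Proof.
move=> h; apply/subr_cvg0/cvgr0Pnorm_lt => e e0.
move/cvgr0Pnorm_lt: h => /(_ e e0); apply: filterS => x /=.
by apply: le_lt_trans; rewrite (le_trans (mxnorm_le_enorm _)) // ger0_norm // enorm_ge0.
Qed.

Lemma cvg_enorm0 (f : T -> 'rV[R]_n) (a : 'rV[R]_n) : f @ F --> a ->
  (fun x => enorm (f x - a)) @ F --> 0.
Proof.
move=> fa; rewrite -(enorm0 R n) -(subrr a); apply: cvg_enorm.
by apply: cvgB => //; exact: cvg_cst.
Qed.

End conv.

Lemma enorm_continuous (R : realType) n : continuous (@enorm R n).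
Proof. by move=> a; apply: (@cvg_enorm R n _ (nbhs a) _ id); exact: cvg_id. Qed.

Lemma extract_subseq (R : realType) m (v : nat -> 'rV[R]_m) (l : 'rV[R]_m) :
  (forall (k N : nat), exists p, (N <= p)%N /\ `|l - v p| < k.+1%:R^-1) ->
  exists phi : nat -> nat, (forall k, (phi k < phi k.+1)%N) /\ v \o phi @ \oo --> l.
Proof.
move=> h.
pose g k N := proj1_sig (cid (h k N)).
have gP k N : (N <= g k N)%N /\ `|l - v (g k N)| < k.+1%:R^-1.
  by rewrite /g; case: cid.
pose fix phi k := if k is k'.+1 then g k (phi k').+1 else g 0%N 0%N.
exists phi; split; first by move=> k /=; case: (gP k.+1 (phi k).+1).
have hk k : `|l - v (phi k)| < k.+1%:R^-1.
  by case: k => [|k] /=; [case: (gP 0%N 0%N)|case: (gP k.+1 (phi k).+1)].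
apply/cvgrPdist_lt => e e0; near=> k.
apply: (lt_trans (hk k)); near: k.
exact: (near_infty_natSinv_lt (PosNum e0)).
Unshelve. all: by end_near. Qed.

Lemma bw_unit (R : realType) m (v : nat -> 'rV[R]_m) :
  (forall k, enorm (v k) = 1) ->
  exists (phi : nat -> nat) (l : 'rV[R]_m),
    (forall k, (phi k < phi k.+1)%N) /\ v \o phi @ \oo --> l.
Proof.
move=> v1.
pose S := [set w : 'rV[R]_m | enorm w = 1].
have cS : compact S.
  apply: bounded_closed_compact.
    exists 1; split; first exact: num_real.
    move=> M M1 w /= Sw; rewrite (le_trans (mxnorm_le_enorm _)) // Sw ltW //.
  apply: (@preimage_closed _ _ (@enorm R m) [set x | x = 1]).
    by move=> x _; exact: enorm_continuous.
  exact: closed_eq.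
have [l [Sl cl]] : S `&` cluster (v @ \oo) !=set0.
  by apply: cS; exists 0%N => // k _; exact: v1.
suff [phi Hphi] : exists phi : nat -> nat, (forall k, (phi k < phi k.+1)%N) /\ v \o phi @ \oo --> l.
  by exists phi, l.
apply: extract_subseq => k N.
have := cl (v @` [set p | (N <= p)%N]) (ball l k.+1%:R^-1).
case.
- by exists N => // p /= Np; exists p.
- by apply: nbhsx_ballx; rewrite invr_gt0.
move=> w [[p /= Np <-]]; rewrite /ball /= => h.
have hb : ball l k.+1%:R^-1 (v p) := h.
by exists p; split => //; move: hb; rewrite -ball_normE.
Qed.

Lemma pdotZl (R : realType) n m (c : R) (a : 'rV[R]_n) (b : 'rV[R]_m) h :
  pdot (c *: a, c *: b) h = c * pdot (a, b) h.
Proof. by rewrite /pdot /= !dotvZl mulrDr. Qed.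

Lemma pnorm_ge0 (R : realType) n m (h : 'rV[R]_n * 'rV[R]_m) : 0 <= pnorm h.
Proof. exact: sqrtr_ge0. Qed.

Lemma rnormal_scale (R : realType) n m (Q : set ('rV[R]_n * 'rV[R]_m)) z
  (a : 'rV[R]_n) (b : 'rV[R]_m) (c : R) :
  rnormal Q z (a, b) -> 0 <= c -> rnormal Q z (c *: a, c *: b).
Proof.
move=> [Qz h] c0; split => // eps eps0.
have c1 : 0 < c + 1 by rewrite ltr_wpDl.
have [del del0 hd] := h (eps / (c + 1)) (divr_gt0 eps0 c1).
exists del => // w Qw wd; rewrite pdotZl.
have := hd w Qw wd => le1.
rewrite (le_trans (ler_wpM2l c0 le1)) // mulrA ler_wpM2r ?pnorm_ge0 //.
rewrite mulrCA ler_piMr ?(ltW eps0) // ler_pdivrMr // mul1r lerDl //.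
Qed.

Lemma shift_cvg (s : nat -> nat) : (forall k, (k <= s k)%N) -> s @ \oo --> \oo.
Proof.
move=> hs P [N _ HN]; exists N => // k /= kN; apply: HN.
exact: leq_trans kN (hs k).
Qed.

Lemma core (R : realType) n m (Phi : 'rV[R]_n -> set 'rV[R]_m) xb yb u e
  (x : nat -> 'rV[R]_n) (y : nat -> 'rV[R]_m) (lam : nat -> 'rV[R]_m)
  (eta : nat -> 'rV[R]_n) :
  quasi_normal_dir Phi xb yb u e ->
  (forall k, gph Phi (x k, y k)) -> (forall k, x k != xb) -> (forall k, y k != yb) ->
  x @ \oo --> xb -> y @ \oo --> yb -> eta @ \oo --> (0 : 'rV[R]_n) ->
  (fun k => (enorm (x k - xb))^-1 *: (x k - xb)) @ \oo --> u ->
  (fun k => (enorm (x k - xb))^-1 *: (y k - yb)) @ \oo --> (0 : 'rV[R]_m) ->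
  (forall k, rcoder Phi (x k) (y k) (lam k) (eta k)) ->
  (fun k => (enorm (y k - yb))^-1 *: (y k - yb) - lam k) @ \oo --> (0 : 'rV[R]_m) ->
  False.
Proof.
move=> QN gx xne yne xc yc etac dxc dyc rc dl.
pose nu k := (enorm (y k - yb))^-1 *: (y k - yb).
have ny k : 0 < enorm (y k - yb) by apply: enorm_gt0; rewrite subr_eq0.
have nu1 k : enorm (nu k) = 1.
  by rewrite enormZ ger0_norm ?invr_ge0 ?enorm_ge0 // mulVf // gt_eqF.
have [phi [l [phiI nuc]]] := bw_unit nu1.
have l1 : enorm l = 1.
  have h : (fun k => enorm ((nu \o phi) k)) @ \oo --> enorm l by exact: cvg_enorm.
  move: h; rewrite (_ : (fun k => enorm ((nu \o phi) k)) = fun=> 1); last first.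
    by apply: funext => k; rewrite /= nu1.
  by move/cvg_lim => <- //; rewrite lim_cst.
have l0 : l != 0.
  by apply/eqP => l0; move: l1; rewrite l0 enorm0 => /eqP; rewrite eq_sym oner_eq0.
have phik k : (k <= phi k)%N.
  by elim: k => // k IH; apply: leq_ltn_trans IH (phiI k).
have lamc : lam \o phi @ \oo --> l.
  have -> : lam \o phi = (fun k => nu (phi k) - (nu (phi k) - lam (phi k))).
    by apply: funext => k; rewrite /= opprB addrC subrK.
  rewrite -[l]subr0; apply: cvgB => //.
  exact: (cvg_comp phi _ (shift_cvg phik) dl).
have sg : \forall k \near \oo, forall i, dotv l (e i) != 0 ->
    0 < dotv l (e i) * dotv (nu (phi k)) (e i).
  apply: filter_forall => i.
  have c1 : (fun k => dotv l (e i) * dotv (nu (phi k)) (e i)) @ \oo -->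
      dotv l (e i) * dotv l (e i).
    apply: cvgM; first exact: cvg_cst.
    by apply: (cvg_dotv nuc); exact: cvg_cst.
  have [z0|z0] := eqVneq (dotv l (e i)) 0.
    by apply: nearW => k; rewrite z0 => /eqP.

  have pos : 0 < dotv l (e i) * dotv l (e i).
    by rewrite -expr2 lt_neqAle sqr_ge0 andbT eq_sym sqrf_eq0.
  by move/cvgr_gt: c1 => /(_ 0 pos); apply: filterS => k hk _.
have [N _ HN] := sg.
pose psi k := phi (k + N).
have psik k : (k <= psi k)%N := leq_trans (leq_addr N k) (phik _).
have psic := shift_cvg psik.
have lampsi : lam \o psi @ \oo --> l.
  exact: (cvg_comp (fun k => k + N)%N _ (shift_cvg (fun k => leq_addr N k)) lamc).
have tpos k : 0 < enorm (x (psi k) - xb) by apply: enorm_gt0; rewrite subr_eq0.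
apply: QN; exists l; split => //; split.
  rewrite /mker /dlcoder /dlnormal /=.
  exists (fun k => enorm (x (psi k) - xb)).
  exists (fun k => ((enorm (x (psi k) - xb))^-1 *: (x (psi k) - xb),
                    (enorm (x (psi k) - xb))^-1 *: (y (psi k) - yb))).
  exists (fun k => (eta (psi k), - lam (psi k))).
  split; first by [].
  split; first exact: (cvg_comp psi _ psic (cvg_enorm0 xc)).
  split.
    apply: (@cvg_pair _ _ _ _ (nbhs u) (nbhs (0 : 'rV[R]_m))); first exact: (cvg_comp psi _ psic dxc).
    exact: (cvg_comp psi _ psic dyc).
  split.
    apply: (@cvg_pair _ _ _ _ (nbhs (0 : 'rV[R]_n)) (nbhs (- l))); first exact: (cvg_comp psi _ psic etac).
    exact: cvgN.
  move=> k /=; rewrite !scalerA !mulrV ?unitfE ?gt_eqF // !scale1r !(addrC xb) !(addrC yb) !subrK.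
  exact: rc.
exists (x \o psi), (y \o psi), (lam \o psi), (eta \o psi).
split; first by move=> k; exact: gx.
split; first by move=> k; exact: xne.
split; first exact: (cvg_comp psi _ psic xc).
split; first exact: (cvg_comp psi _ psic yc).
split; first exact: lampsi.
split; first exact: (cvg_comp psi _ psic etac).
split; first exact: (cvg_comp psi _ psic dxc).
split; first exact: (cvg_comp psi _ psic dyc).
split; first by move=> k; exact: rc.
move=> k i hi; have := HN (k + N)%N (leq_addl _ _) i hi.
rewrite /nu dotvZl mulrCA pmulr_rgt0 // invr_gt0 //.
Qed.

Lemma partA (R : realType) n m (Phi : 'rV[R]_n -> set 'rV[R]_m) xb yb u e :
  quasi_normal_dir Phi xb yb u e -> Phi xb yb -> strong_asym_reg_dir Phi xb yb u.
Proof.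
move=> QN Pb xk yk xsk lamk xs ys gk nP yne rck xc yc xsc dxc dyc lamc dl yslim.
exfalso.
have cc : (fun k => (enorm (lamk k))^-1) @ \oo --> (0 : R).
  apply/cvgr0Pnorm_lt => eps eps0.
  move/cvgryPgt: lamc => /(_ eps^-1); apply: filterS => k hk.
  have hp : 0 < enorm (lamk k) by apply: lt_trans hk; rewrite invr_gt0.
  by rewrite ger0_norm ?invr_ge0 ?enorm_ge0 // invf_plt.
apply: (core (lam := fun k => (enorm (lamk k))^-1 *: lamk k)
             (eta := fun k => (enorm (lamk k))^-1 *: xsk k) QN gk _ yne xc yc _ dxc dyc _ dl).
- by move=> k; apply/eqP => h; apply: (nP k); rewrite h.
- by rewrite -(scale0r xs); apply: cvgZ.
- move=> k; rewrite /rcoder /= -scalerN; apply: rnormal_scale (rck k) _.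
  by rewrite invr_ge0 enorm_ge0.
Qed.

Section algebra.
Variables (R : realType) (n : nat).
Implicit Types (A D h : 'rV[R]_n).

Lemma dotv_expand D h : dotv (D + h) (D + h) = dotv D D + 2 * dotv D h + dotv h h.
Proof.
rewrite dotvDl !dotvDr (dotvC h D) addrA; congr (_ + _).
by rewrite -addrA -mulr2n mulr_natl.
Qed.

Lemma enorm_add_le A h : A != 0 ->
  enorm (A + h) <= enorm A + (dotv A h + dotv h h) / enorm A.
Proof.
move=> A0; have s0 := enorm_gt0 A0.
set s := enorm A; set B := dotv A h; set C := dotv h h.
have C0 : 0 <= C by exact: dotv_ge0.
have ss : s ^+ 2 = dotv A A by rewrite enorm_sq.
have Y0 : 0 <= s ^+ 2 + B + C.
  have := dotv_ge0 (A + 2^-1 *: h).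
  rewrite dotv_expand dotvZr dotvZl dotvZr -ss -/B -/C => H.
  lra.
have -> : s + (B + C) / s = (s ^+ 2 + B + C) / s.
  by field; rewrite gt_eqF.
have Yd0 : 0 <= (s ^+ 2 + B + C) / s by rewrite divr_ge0 // ltW.
rewrite -(ler_pXn2r (_ : 0 < 2)%N) ?nnegrE ?enorm_ge0 //.
rewrite enorm_sq dotv_expand -ss -/B -/C expr_div_n ler_pdivlMr ?exprn_gt0 //.
have : 0 <= s ^+ 2 * C + (B + C) ^+ 2 by rewrite addr_ge0 ?sqr_ge0 // mulr_ge0 ?sqr_ge0.
move=> H; rewrite -subr_ge0 (_ : _ - _ = s ^+ 2 * C + (B + C) ^+ 2) //.
ring.
Qed.

End algebra.

Lemma t_le_1sq (R : realType) (t : R) : t <= 1 + t ^+ 2.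
Proof. nra. Qed.

Lemma step (R : realType) n m (Phi : 'rV[R]_n -> set 'rV[R]_m) xb yb (K : R)
  (x0 : 'rV[R]_n) :
  closed (gph Phi) -> Phi xb yb -> 1 <= K ->
  ~ (Defs.edist x0 [set z | Phi z yb] <= (K ^+ 2)%:E * Defs.edist yb (Phi x0))%E ->
  exists (a : R) (xt : 'rV[R]_n) (yt : 'rV[R]_m),
   [/\ 0 < a, a <= enorm (x0 - xb), gph Phi (xt, yt), ~ Phi xt yb &
    [/\ enorm (yt - yb) <= a / K ^+ 2,
        dotv (xt - x0) (xt - x0) <= a ^+ 2 / K ^+ 3,
        rcoder Phi xt yt ((enorm (yt - yb))^-1 *: (yt - yb)) ((2 * (K / a)) *: (x0 - xt)) &
        dotv ((2 * (K / a)) *: (x0 - xt)) ((2 * (K / a)) *: (x0 - xt)) <= 4 / K]].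
Proof.
move=> hcl Pb K1 hnot.
have K0 : 0 < K by apply: lt_le_trans K1.
set S := [set z | Phi z yb].
have al0 : (0 <= Defs.edist x0 S)%E.
  by apply: le_ereal_inf_tmp => _ [z _ <-]; rewrite lee_fin enorm_ge0.
have alx : (Defs.edist x0 S <= (enorm (x0 - xb))%:E)%E.
  by apply: ereal_inf_lbound; exists xb.
have alz : forall z, Phi z yb -> (Defs.edist x0 S <= (enorm (x0 - z))%:E)%E.
  by move=> z hz; apply: ereal_inf_lbound; exists z.
have r0 : (0 <= Defs.edist yb (Phi x0))%E.
  by apply: le_ereal_inf_tmp => _ [z _ <-]; rewrite lee_fin enorm_ge0.
have hlt : ((K ^+ 2)%:E * Defs.edist yb (Phi x0) < Defs.edist x0 S)%E.
  by rewrite ltNge; apply/negP.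
have rinf : forall t : R, (Defs.edist yb (Phi x0) < t%:E)%E ->
    exists2 y, Phi x0 y & enorm (y - yb) < t.
  move=> t /ereal_inf_lt [_ [y Py <-]]; rewrite lte_fin => h.
  by exists y => //; rewrite enormB.
move: al0 alx alz hlt; case: (Defs.edist x0 S) => [a| |] //.
move=> al0 alx alz.
move: r0 rinf; case: (Defs.edist yb (Phi x0)) => [r| |] //; first last.
  by move=> _ _; rewrite muleC gt0_mulye ?lte_fin ?exprn_gt0 // ltNge leey.
move=> r0 rinf hlt.
rewrite lee_fin in al0 alx r0; rewrite -EFinM lte_fin in hlt.
have alz' : forall z, Phi z yb -> a <= enorm (x0 - z).
  by move=> z /alz; rewrite lee_fin.
have a0 : 0 < a by apply: le_lt_trans hlt; rewrite mulr_ge0 ?sqr_ge0.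
have [y Py yl] : exists2 y, Phi x0 y & enorm (y - yb) < a / K ^+ 2.
  apply: rinf; rewrite lte_fin ltr_pdivlMr ?exprn_gt0 // mulrC //.
pose be := K / a.
have be0 : 0 < be by rewrite divr_gt0.
pose phi (p : 'rV[R]_n * 'rV[R]_m) := enorm (p.2 - yb) + be * dotv (p.1 - x0) (p.1 - x0).
pose M0 := enorm (y - yb).
have phic : continuous phi.
  move=> p; apply: cvgD.
    apply: cvg_enorm; apply: cvgB; [exact: cvg_snd|exact: cvg_cst].
  apply: cvgM; first exact: cvg_cst.
  by apply: cvg_dotv; apply: cvgB; (exact: cvg_fst || exact: cvg_cst).
pose A := gph Phi `&` [set p | phi p <= M0].
have phi_ge p : enorm (p.2 - yb) <= phi p /\ be * dotv (p.1 - x0) (p.1 - x0) <= phi p.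
  split; rewrite /phi.
    by rewrite lerDl mulr_ge0 ?dotv_ge0 // ltW.
  by rewrite lerDr enorm_ge0.
have cA : compact A.
  pose C1 := 1 + M0 / be + `|x0|.
  pose C2 := M0 + `|yb|.
  apply: (@subclosed_compact _ A ([set x | `|x| <= C1] `*` [set y | `|y| <= C2])).
  - apply: closedI => //.
    apply: (@preimage_closed _ _ phi [set t | t <= M0]); last exact: closed_le.
    by move=> p _; exact: phic.
  - apply: compact_setX; apply: bounded_closed_compact.
    + exists C1; split; first exact: num_real.
      by move=> M hM w /= hw; apply: le_trans hw (ltW hM).
    + apply: (@preimage_closed _ _ (fun x : 'rV[R]_n => `|x|) [set t | t <= C1]); last exact: closed_le.
      by move=> p _; exact: norm_continuous.
    + exists C2; split; first exact: num_real.
      by move=> M hM w /= hw; apply: le_trans hw (ltW hM).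
    + apply: (@preimage_closed _ _ (fun x : 'rV[R]_m => `|x|) [set t | t <= C2]); last exact: closed_le.
      by move=> p _; exact: norm_continuous.
  - move=> [p1 p2] [_ /= hp]; have [h1 h2] := phi_ge (p1, p2); split => /=.
    + have -> : p1 = (p1 - x0) + x0 by rewrite subrK.
      rewrite (le_trans (ler_normD _ _)) // /C1 lerD2r.
      apply: (le_trans (mxnorm_le_enorm _)); apply: (le_trans (t_le_1sq _)).
      rewrite lerD2l enorm_sq ler_pdivlMr // mulrC.
      by apply: le_trans h2 hp.
    + have -> : p2 = (p2 - yb) + yb by rewrite subrK.
      rewrite (le_trans (ler_normD _ _)) // /C2 lerD2r.
      apply: (le_trans (mxnorm_le_enorm _)).
      by apply: le_trans h1 hp.
have A0 : A !=set0.
  exists (x0, y); split => //=.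
  by rewrite /phi /= subrr dotv0l mulr0 addr0.
have [[xt yt] cinA cmin] := compact_EVT_min A0 cA (continuous_subspaceT phic).
have glob : forall w, gph Phi w -> phi (xt, yt) <= phi w.
  move=> w gw; have [hw|hw] := leP (phi w) M0.
    by apply: cmin; rewrite inE.
  by apply: le_trans (ltW hw); move: cinA; rewrite inE => -[_].
have gxt : gph Phi (xt, yt) by move: cinA; rewrite inE => -[].
have phic_le : phi (xt, yt) <= M0 by move: cinA; rewrite inE => -[].
have phiM : phi (xt, yt) < a / K ^+ 2 := le_lt_trans phic_le yl.
have [hy hx] := phi_ge (xt, yt); rewrite /= in hy hx.
have ey : enorm (yt - yb) <= a / K ^+ 2 := ltW (le_lt_trans hy phiM).
have K3 : 1 <= K ^+ 3 by rewrite exprn_ege1.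
have exs : dotv (xt - x0) (xt - x0) < a ^+ 2 / K ^+ 3.
  have h := le_lt_trans hx phiM.
  rewrite (_ : a ^+ 2 / K ^+ 3 = (a / K ^+ 2) / be); last first.
    by rewrite /be; field; rewrite !gt_eqF.
  by rewrite ltr_pdivlMr // mulrC.
have dsym : dotv (x0 - xt) (x0 - xt) = dotv (xt - x0) (xt - x0).
  by rewrite -opprB dotvNl dotvNr opprK.
have ng : ~ Phi xt yb.
  move=> hP; have := alz' xt hP => h.
  have : a ^+ 2 <= dotv (xt - x0) (xt - x0).
    by rewrite -dsym -enorm_sq ler_pXn2r ?nnegrE ?enorm_ge0 // ltW.
  move=> h2; have := le_lt_trans h2 exs.
  by rewrite ltr_pdivlMr ?(lt_le_trans ltr01) // ltNge ler_peMr // sqr_ge0.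
have yne : yt != yb by apply/eqP => e; apply: ng; rewrite -e; exact: gxt.
exists a, xt, yt; split => //; split => //.
- exact: ltW.
- split => // eps eps0.
  set s := enorm (yt - yb).
  have s0 : 0 < s by apply: enorm_gt0; rewrite subr_eq0.
  set Cc := be + s^-1.
  have Cc0 : 0 < Cc by rewrite addr_gt0 // invr_gt0.
  exists (eps / Cc); first by rewrite divr_gt0.
  move=> [w1 w2] gw /=.
  set P := pnorm _ => hP.
  have hge := glob (w1, w2) gw; rewrite /phi /= in hge.
  have e2 : w2 - yb = (yt - yb) + (w2 - yt) by rewrite [RHS]addrC addrA subrK.
  have e1 : w1 - x0 = (xt - x0) + (w1 - xt) by rewrite [RHS]addrC addrA subrK.
  rewrite e2 e1 (dotv_expand (xt - x0) (w1 - xt)) in hge.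
  have ytyb : yt - yb != 0 by rewrite subr_eq0.
  have hn := enorm_add_le (w2 - yt) ytyb.
  have P0 : 0 <= P by exact: pnorm_ge0.
  have P2 : P ^+ 2 = dotv (w1 - xt) (w1 - xt) + dotv (w2 - yt) (w2 - yt).
    by rewrite /P /pnorm sqr_sqrtr // /pdot /= addr_ge0 ?dotv_ge0.
  have CP : Cc * P <= eps by rewrite mulrC -ler_pdivlMr // ltW.
  rewrite /pdot /= dotvZl dotvNl dotvZl -(opprB xt x0) dotvNl.
  move: hge hn P2 CP; rewrite -/s.
  set D2 := dotv (xt - x0) (xt - x0).
  set Dh := dotv (xt - x0) (w1 - xt).
  set H1 := dotv (w1 - xt) (w1 - xt).
  set B := dotv (yt - yb) (w2 - yt).
  set H2 := dotv (w2 - yt) (w2 - yt).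
  set E := enorm _.
  move=> hge hn P2 CP.
  have H10 : 0 <= H1 by exact: dotv_ge0.
  have H20 : 0 <= H2 by exact: dotv_ge0.
  have si0 : 0 < s^-1 by rewrite invr_gt0.
  have f1 : 0 <= s^-1 * H1 by rewrite mulr_ge0 // ltW.
  have f2 : 0 <= be * H2 by rewrite mulr_ge0 // ltW.
  have f3 : 0 <= (eps - Cc * P) * P by rewrite mulr_ge0 // subr_ge0.
  have hn' : E <= s + B * s^-1 + H2 * s^-1.
    by move: hn; rewrite -/s -/B -/H2 -addrA -mulrDl.
  change (K / a) with be; rewrite /Cc in f3 CP.
  have hge2 : s + be * D2 <= E + be * D2 + 2 * (be * Dh) + be * H1.
    by move: hge; rewrite !mulrDr !addrA mulrCA.
  have hgoal : 2 * be * - Dh - s^-1 * B = - (2 * (be * Dh)) - B / s.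
    by rewrite mulrN mulrA (mulrC _ B).
  rewrite hgoal.
  have Pm : eps * P >= (be + s^-1) * (P ^+ 2).
    by rewrite expr2 mulrA -subr_ge0 -mulrBl.
  rewrite P2 !mulrDr !mulrDl in Pm.
  have f1b : 0 <= H1 / s by rewrite mulrC.
  lra.
- rewrite dotvZl dotvZr mulrA dsym.
  apply: le_trans (ler_wpM2l _ (ltW exs)) _.
    by rewrite mulr_ge0 // mulr_ge0 // ltW.
  rewrite le_eqVlt; apply/orP; left; apply/eqP.
  by rewrite /be; field; rewrite !gt_eqF.
Qed.

Lemma invS_cvg0 (R : realType) : (fun k : nat => (k.+1%:R : R)^-1) @ \oo --> (0 : R).
Proof.
apply/cvgr0Pnorm_lt => e e0; near=> k.
rewrite ger0_norm ?invr_ge0 ?ler0n //.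
near: k; exact: (near_infty_natSinv_lt (PosNum e0)).
Unshelve. all: by end_near. Qed.

Lemma bound_cvg (R : realType) n (f : nat -> 'rV[R]_n) (a : 'rV[R]_n) (r : nat -> R) :
  (forall k, enorm (f k - a) <= r k) -> r @ \oo --> (0 : R) -> f @ \oo --> a.
Proof.
move=> hb rc; apply: enorm_cvg; apply/cvgr0Pnorm_lt => e e0.
move/cvgr0Pnorm_lt: rc => /(_ e e0); apply: filterS => k hk.
rewrite ger0_norm ?enorm_ge0 //; apply: le_lt_trans (hb k) _.
by apply: le_lt_trans hk; exact: ler_norm.
Qed.

Lemma sq_bound_cvg (R : realType) n (f : nat -> 'rV[R]_n) (r : nat -> R) :
  (forall k, dotv (f k) (f k) <= r k) -> r @ \oo --> (0 : R) -> f @ \oo --> (0 : 'rV[R]_n).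
Proof.
move=> hb rc; apply: enorm_cvg; apply/cvgr0Pnorm_lt => e e0.
move/cvgr0Pnorm_lt: rc => /(_ (e ^+ 2) (exprn_gt0 _ e0)); apply: filterS => k hk.
rewrite subr0 ger0_norm ?enorm_ge0 //.
rewrite -(ltr_pXn2r (_ : 0 < 2)%N) ?nnegrE ?enorm_ge0 ?ltW // enorm_sq.
by apply: le_lt_trans (hb k) _; apply: le_lt_trans hk; exact: ler_norm.
Qed.

Lemma scale_dir (R : realType) n p (c : R) (w : 'rV[R]_n) (y : 'rV[R]_p) : 0 < c ->
  (enorm (c *: w))^-1 *: (c *: y) = (enorm w)^-1 *: y.
Proof.
move=> c0; by rewrite enormZ gtr0_norm // scalerA invfM mulrAC mulVf ?gt_eqF // mul1r.
Qed.

Lemma dir_cvg (R : realType) n (z : nat -> 'rV[R]_n) (u : 'rV[R]_n) :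
  z @ \oo --> u -> enorm u = 1 ->
  (fun k => (enorm (z k))^-1 *: z k) @ \oo --> u.
Proof.
move=> zc u1.
have h : (fun k => (enorm (z k))^-1 *: z k) @ \oo --> (enorm u)^-1 *: u.
  apply: cvgZ => //; apply: cvgV; first by rewrite u1 oner_eq0.
  exact: cvg_enorm.
by move: h; rewrite u1 invr1 scale1r.
Qed.

Lemma Kbound (R : realType) (K c : R) j : 1 <= K -> 0 <= c -> c <= 1 -> (0 < j)%N ->
  c / K ^+ j <= K^-1.
Proof.
move=> K1 c0 c1 j0; have K0 : 0 < K by apply: lt_le_trans K1.
rewrite ler_pdivrMr ?exprn_gt0 //.
rewrite -(prednK j0) exprS mulrA mulVf ?gt_eqF // mul1r.
by apply: le_trans c1 _; rewrite exprn_ege1.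
Qed.

Lemma partB (R : realType) n m (Phi : 'rV[R]_n -> set 'rV[R]_m) xb yb u e :
  closed (gph Phi) -> Phi xb yb -> enorm u = 1 ->
  quasi_normal_dir Phi xb yb u e -> metric_subreg_dir Phi xb yb u.
Proof.
move=> hcl Pb u1 QN; apply: contrapT => nM.
have hk : forall k : nat, exists x0 : 'rV[R]_n,
    Bdir (k.+1%:R^-1) (k.+1%:R^-1) u (x0 - xb) /\
    ~ (Defs.edist x0 [set z | Phi z yb] <=
       ((k.+1%:R : R) ^+ 2)%:E * Defs.edist yb (Phi x0))%E.
  move=> k; apply: contrapT => hn; apply: nM.
  exists k.+1%:R^-1, k.+1%:R^-1, (k.+1%:R ^+ 2).
  split; first by rewrite invr_gt0 ltr0n.
  split; first by rewrite invr_gt0 ltr0n.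
  split; first by rewrite exprn_gt0 // ltr0n.
  move=> x hB; apply: contrapT => hx; apply: hn; by exists x.
have [x0 x0P] := choice hk.
have hs : forall k : nat, exists p : R * 'rV[R]_n * 'rV[R]_m,
    let K := (k.+1%:R : R) in let a := p.1.1 in let xt := p.1.2 in let yt := p.2 in
    [/\ 0 < a, a <= enorm (x0 k - xb), gph Phi (xt, yt), ~ Phi xt yb &
    [/\ enorm (yt - yb) <= a / K ^+ 2,
        dotv (xt - x0 k) (xt - x0 k) <= a ^+ 2 / K ^+ 3,
        rcoder Phi xt yt ((enorm (yt - yb))^-1 *: (yt - yb)) ((2 * (K / a)) *: (x0 k - xt)) &
        dotv ((2 * (K / a)) *: (x0 k - xt)) ((2 * (K / a)) *: (x0 k - xt)) <= 4 / K]].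
  move=> k; have [_ hn] := x0P k.
  have K1 : 1 <= (k.+1%:R : R) by rewrite ler1n.
  have [a [xt [yt H]]] := step hcl Pb K1 hn.
  by exists (a, xt, yt).
have [p pP] := choice hs.
pose a k := (p k).1.1; pose xt k := (p k).1.2; pose yt k := (p k).2.
have K1 k : 1 <= (k.+1%:R : R) by rewrite ler1n.
have Kp k : 0 < (k.+1%:R : R) by rewrite ltr0n.
have a0 k : 0 < a k by case: (pP k).
have ax k : a k <= enorm (x0 k - xb) by case: (pP k).
have gxt k : gph Phi (xt k, yt k) by case: (pP k).
have ngt k : ~ Phi (xt k) yb by case: (pP k).
have ey k : enorm (yt k - yb) <= a k / (k.+1%:R) ^+ 2 by case: (pP k) => ? ? ? ? [].
have ex k : dotv (xt k - x0 k) (xt k - x0 k) <= a k ^+ 2 / (k.+1%:R) ^+ 3.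
  by case: (pP k) => ? ? ? ? [].
have rck k : rcoder Phi (xt k) (yt k) ((enorm (yt k - yb))^-1 *: (yt k - yb))
    ((2 * (k.+1%:R / a k)) *: (x0 k - xt k)) by case: (pP k) => ? ? ? ? [].
have eb k : dotv ((2 * (k.+1%:R / a k)) *: (x0 k - xt k))
    ((2 * (k.+1%:R / a k)) *: (x0 k - xt k)) <= 4 / k.+1%:R.
  by case: (pP k) => ? ? ? ? [].
pose rho k := enorm (x0 k - xb).
have rho0 k : 0 < rho k by apply: lt_le_trans (ax k).
have [Bd1 Bd2] : (forall k, enorm (enorm (x0 k - xb) *: u - enorm u *: (x0 k - xb)) <=
      k.+1%:R^-1 * enorm u * enorm (x0 k - xb)) /\
    (forall k, enorm (x0 k - xb) <= k.+1%:R^-1).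
  by split => k; case: (x0P k) => -[].
have rle1 k : rho k <= 1.
  by apply: le_trans (Bd2 k) _; rewrite invf_le1 ?K1.
have ale1 k : a k <= 1 := le_trans (ax k) (rle1 k).
have arho0 k : 0 <= a k / rho k by rewrite divr_ge0 ?ltW.
have arho1 k : a k / rho k <= 1 by rewrite ler_pdivrMr // mul1r.
have xc0 : x0 @ \oo --> xb.
  by apply: (bound_cvg (r := fun k => k.+1%:R^-1)) => //; exact: invS_cvg0.
have dc : (fun k => xt k - x0 k) @ \oo --> (0 : 'rV[R]_n).
  apply: (sq_bound_cvg (r := fun k => k.+1%:R^-1)); last exact: invS_cvg0.
  move=> k; apply: le_trans (ex k) _; apply: Kbound => //; first exact: sqr_ge0.
  by rewrite expr_le1 // ltW.
have xtc : xt @ \oo --> xb.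
  have -> : xt = (fun k => x0 k + (xt k - x0 k)) by apply: funext => k; rewrite addrC subrK.
  by rewrite -[xb]addr0; apply: cvgD.
have ytc : yt @ \oo --> yb.
  apply: (bound_cvg (r := fun k => k.+1%:R^-1)); last exact: invS_cvg0.
  by move=> k; apply: le_trans (ey k) _; apply: Kbound => //; exact: ltW.
have etac : (fun k => (2 * (k.+1%:R / a k)) *: (x0 k - xt k)) @ \oo --> (0 : 'rV[R]_n).
  apply: (sq_bound_cvg (r := fun k => 4 * k.+1%:R^-1)) => //.
  by rewrite -(mulr0 4); apply: cvgM; [exact: cvg_cst|exact: invS_cvg0].
pose z k := (rho k)^-1 *: (xt k - xb).
have zc : z @ \oo --> u.
  have -> : z = (fun k => (rho k)^-1 *: (x0 k - xb) + (rho k)^-1 *: (xt k - x0 k)).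
    apply: funext => k; rewrite /z -scalerDr; congr (_ *: _).
    by rewrite [RHS]addrC addrA subrK.
  rewrite -[u]addr0; apply: cvgD.
    apply: (bound_cvg (r := fun k => k.+1%:R^-1)); last exact: invS_cvg0.
    move=> k; have h := Bd1 k; rewrite u1 scale1r mulr1 -/(rho k) in h.
    rewrite (_ : _ - u = (rho k)^-1 *: ((x0 k - xb) - rho k *: u)); last first.
      by rewrite [RHS]scalerBr scalerA mulVf ?gt_eqF // scale1r.
    rewrite enormZ ger0_norm ?invr_ge0 ?(ltW (rho0 k)) // enormB.
    by rewrite mulrC ler_pdivrMr.
  apply: (sq_bound_cvg (r := fun k => k.+1%:R^-1)); last exact: invS_cvg0.
  move=> k; rewrite dotvZl dotvZr mulrA.
  apply: le_trans (ler_wpM2l _ (ex k)) _; first by rewrite mulr_ge0 // invr_ge0 ltW.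
  rewrite mulrA (_ : _ * _ * a k ^+ 2 = (a k / rho k) ^+ 2); last first.
    by field; rewrite gt_eqF.
  apply: Kbound => //; first exact: sqr_ge0.
  by rewrite expr_le1.
have zn : (fun k => enorm (z k)) @ \oo --> (1 : R) by rewrite -u1; exact: cvg_enorm.
have dirc : (fun k => (enorm (xt k - xb))^-1 *: (xt k - xb)) @ \oo --> u.
  have -> : (fun k => (enorm (xt k - xb))^-1 *: (xt k - xb)) =
      (fun k => (enorm (z k))^-1 *: z k).
    by apply: funext => k; rewrite /z scale_dir // invr_gt0.
  exact: dir_cvg.
have dyc : (fun k => (enorm (xt k - xb))^-1 *: (yt k - yb)) @ \oo --> (0 : 'rV[R]_m).
  have -> : (fun k => (enorm (xt k - xb))^-1 *: (yt k - yb)) =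
      (fun k => (enorm (z k))^-1 *: ((rho k)^-1 *: (yt k - yb))).
    by apply: funext => k; rewrite /z scale_dir // invr_gt0.
  rewrite -(scaler0 _ (1^-1 : R)); apply: cvgZ.
    by apply: cvgV => //; rewrite oner_eq0.
  apply: (bound_cvg (r := fun k => k.+1%:R^-1)); last exact: invS_cvg0.
  move=> k; rewrite subr0 enormZ ger0_norm ?invr_ge0 ?(ltW (rho0 k)) //.
  apply: le_trans (ler_wpM2l _ (ey k)) _; first by rewrite invr_ge0 ltW.
  rewrite mulrA (mulrC _ (a k)); apply: Kbound => //.
apply: (core (x := xt) (y := yt) (lam := fun k => (enorm (yt k - yb))^-1 *: (yt k - yb))
  (eta := fun k => (2 * (k.+1%:R / a k)) *: (x0 k - xt k)) QN gxt _ _ xtc ytc etac dirc dyc rck).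
- by move=> k; apply/eqP => h; apply: (ngt k); rewrite h.
- by move=> k; apply/eqP => h; apply: (ngt k); rewrite -h; exact: gxt.
- under eq_cvg do rewrite subrr; exact: cvg_cst.
Qed.

Unset Implicit Arguments.

Theorem mainTheorem4 (R : realType) (n m : nat) (Phi : 'rV[R]_n -> set 'rV[R]_m)
  (xb : 'rV[R]_n) (yb : 'rV[R]_m) (u : 'rV[R]_n) (e : 'I_m -> 'rV[R]_m) :
  closed (gph Phi) -> Phi xb yb -> enorm u = 1 ->
  orthonormal_basis e -> quasi_normal_dir Phi xb yb u e ->
  strong_asym_reg_dir Phi xb yb u /\ metric_subreg_dir Phi xb yb u.
Proof.
move=> hcl Pb u1 _ QN; split; first exact: (partA QN Pb).
exact: (partB hcl Pb u1 QN).
Qed.
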